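(* Let $(t_n(x))_{n\ge0}$ be the generalized Gončarov basis associated with $(\mathfrak d,\mathcal Z)$, $\mathcal Z=(z_i)_{i\ge0}$, and let $d(t)\in\mathbb K[[t]]$ be the compositional inverse of the $D$-indicator of $\mathfrak d$. Then, as formal power series in $t$ with coefficients in $\mathbb K[x]$, $$e^{x\,d(t)}=\sum_{n\ge0}\frac{1}{n!}\,t_n(x)\,e^{z_n d(t)}\,t^n.$$ In particular, if $\mathfrak d=D$, then $e^{xt}=\sum_{n\ge0}\frac1{n!}t_n(x)e^{z_nt}t^n$.
   Context: $\mathbb K$ is a field of characteristic zero, $D=d/dx$ on $\mathbb K[x]$. A delta operator is a linear operator $\mathfrak d$ on $\mathbb K[x]$ commuting with all shifts $E_a:f(x)\mapsto f(x+a)$ and with $\mathfrak d(x)$ a nonzero constant. Every shift-invariant operator $S$ can be written uniquely as $S=\sum_{k\ge0}c_kD^k$; the formal power series $q(t)=\sum_k c_kt^k$ is its $D$-indicator. For a delta operator, $q(0)=0$ and $q'(0)\neq0$, so $q$ has a compositional inverse $d(t)$. $\varepsilon_z$ is evaluation at $z$. The generalized Gončarov basis associated with $(\mathfrak d,\mathcal Z)$ is the unique sequence $(t_n)_{n\ge0}$ with $\deg t_n=n$ and $\varepsilon_{z_i}(\mathfrak d^{\,i}(t_n))=n!\,\delta_{i,n}$ for all $i,n$. *)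

(* Defs.v *)
From HB Require Import structures.
From mathcomp Require Import all_boot all_order all_algebra.
Set Implicit Arguments. Unset Strict Implicit. Unset Printing Implicit Defensive.
Import Order.TTheory GRing.Theory Num.Theory.
Local Open Scope ring_scope.

(* Formal power series in t with coefficients in R, given by their
   coefficient sequences: f m is the coefficient of t^m. *)
Definition fps (R : Type) := nat -> R.

Section FPS.
Variable R : pzRingType.

Definition fps_one : fps R := fun m => (m == 0%N)%:R.
Definition fps_X : fps R := fun m => (m == 1%N)%:R.

Definition fps_mul (f g : fps R) : fps R :=
  fun m => \sum_(i < m.+1) f i * g (m - i)%N.

Fixpoint fps_pow (f : fps R) (k : nat) : fps R :=
  match k with
  | 0 => fps_one
  | k'.+1 => fps_mul f (fps_pow f k')
  end.

(* composition f(g(t)); meaningful when g 0 = 0, since then g^k has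
   order >= k and only k <= m contributes to the coefficient of t^m *)
Definition fps_comp (f g : fps R) : fps R :=
  fun m => \sum_(k < m.+1) f k * fps_pow g k m.
End FPS.

(* exponential exp(f) = sum_k f^k / k! of a series f with f 0 = 0, with
   coefficients in a K-algebra A (K a field of characteristic 0);
   again only k <= m contributes to the coefficient of t^m. *)
Definition fps_exp (K : fieldType) (A : lalgType K) (f : fps A) : fps A :=
  fun m => \sum_(k < m.+1) ((k`!)%:R^-1 : K) *: fps_pow f k m.

Definition shift (K : fieldType) (a : K) (p : {poly K}) : {poly K} :=
  p \Po ('X + a%:P).

Definition delta_operator (K : fieldType) (dd : {linear {poly K} -> {poly K}}) :=
  (forall a p, dd (shift a p) = shift a (dd p)) /\
  exists2 c : K, c != 0 & dd 'X = c%:P.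

(* q is the D-indicator of the shift-invariant operator S:
   S = sum_k q_k D^k (on p only k < size p contributes). *)
Definition D_indicator (K : fieldType) (S : {poly K} -> {poly K}) (q : fps K) :=
  forall p, S p = \sum_(k < size p) q k *: p^`(k).

Definition comp_inverse (K : fieldType) (q d : fps K) :=
  [/\ q 0%N = 0, d 0%N = 0, fps_comp q d = fps_X K & fps_comp d q = fps_X K].

Definition goncarov_basis (K : fieldType) (dd : {poly K} -> {poly K})
    (z : nat -> K) (t : nat -> {poly K}) :=
  (forall n, size (t n) = n.+1) /\
  (forall i n, (iter i dd (t n)).[z i] = (n`! * (i == n))%:R).

(* Main.v *)
Require Import Defs.
From HB Require Import structures.
From mathcomp Require Import all_boot all_order all_algebra.
From Stdlib Require Import FunctionalExtensionality.
From mathcomp Require Import zify ring.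
Set Implicit Arguments. Unset Strict Implicit.
Import GRing.Theory.
Local Open Scope ring_scope.

Definition pN (K : fieldType) (N : nat) (f : fps K) : {poly K} := \poly_(i < N) f i.

Lemma fps_pow_pN (K : fieldType) (N : nat) (f : fps K) k m :
  (m < N)%N -> fps_pow f k m = (pN N f ^+ k)`_m.
Proof.
elim: k m => [|k IH] m hm /=; first by rewrite /fps_one coef1.
rewrite /fps_mul exprS coefM; apply: eq_bigr => i _.
rewrite IH; last by apply: leq_ltn_trans hm; apply: leq_subr.
rewrite /pN coef_poly; case: ifP => // /negbT; rewrite -leqNgt => h.
by have := ltn_ord i; rewrite ltnS => h2; move: (leq_ltn_trans h2 hm); rewrite ltnNge h.
Qed.

Lemma pN_pow_small (K : fieldType) (N : nat) (f : fps K) k m :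
  f 0%N = 0 -> (m < k)%N -> (pN N f ^+ k)`_m = 0.
Proof.
move=> f0; elim: k m => [|k IH] m // hm.
rewrite exprS coefM big1 // => i _.
case: (posnP i) => [->|ip].
  by rewrite /pN coef_poly; case: ifP => _; rewrite ?f0 mul0r.
rewrite IH ?mulr0 //; have := ltn_ord i; lia.
Qed.

Lemma sum_widen (R : nmodType) (n N : nat) (F : nat -> R) :
  (n <= N)%N -> (forall j, (n <= j)%N -> (j < N)%N -> F j = 0) ->
  \sum_(j < n) F j = \sum_(j < N) F j.
Proof.
move=> hn hF; rewrite -!(big_mkord xpredT) (big_cat_nat (leq0n n) hn) /=.
rewrite [X in _ + X]big1_seq ?addr0 // => j /andP[_]; rewrite mem_index_iota.
by case/andP => h1 h2; apply: hF.
Qed.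

Lemma fps_pow_scale (R : comPzRingType) (a : R) (g g' : fps R) k m :
  (forall l, g' l = a * g l) -> fps_pow g' k m = a ^+ k * fps_pow g k m.
Proof.
move=> hg; elim: k m => [|k IH] m /=; first by rewrite expr0 mul1r.
rewrite /fps_mul mulr_sumr; apply: eq_bigr => i _.
by rewrite hg IH exprS mulrACA.
Qed.

Lemma fps_pow_polyC (K : fieldType) (g : fps K) (g' : fps {poly K}) k m :
  (forall l, g' l = (g l)%:P) -> fps_pow g' k m = (fps_pow g k m)%:P.
Proof.
move=> hg; elim: k m => [|k IH] m /=; first by rewrite /fps_one polyC_natr.
rewrite /fps_mul rmorph_sum; apply: eq_bigr => i _.
by rewrite hg IH -polyCM.
Qed.

Lemma fps_exp_expand (K : fieldType) (N : nat) (d : fps K) (a : {poly K}) k :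
  d 0%N = 0 -> (k < N)%N ->
  fps_exp (fun j => a * (d j)%:P) k =
  \sum_(j < N) (((j`!)%:R^-1 : K) * (pN N d ^+ j)`_k) *: a ^+ j.
Proof.
move=> d0 hk; rewrite /fps_exp.
have H := @sum_widen _ k.+1 N (fun j => (((j`!)%:R^-1 : K) * (pN N d ^+ j)`_k) *: a ^+ j) hk.
rewrite -H; last by move=> j hj _; rewrite pN_pow_small // mulr0 scale0r.
apply: eq_bigr => j _.
rewrite (@fps_pow_scale _ a (fun l => (d l)%:P)) // (@fps_pow_polyC _ d) //.
by rewrite (fps_pow_pN _ _ hk) mulrC mul_polyC scalerA.
Qed.

Lemma core (K : fieldType) (N : nat) (q d : fps K) i k :
  d 0%N = 0 -> fps_comp q d = fps_X K -> (0 < k)%N -> (k < N)%N ->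
  \sum_(l < N) q l * (pN N d ^+ (l + i))`_k = (pN N d ^+ i)`_k.-1.
Proof.
move=> d0 hc k0 kN.
set δ := pN N d.
pose C := \sum_(l < N) q l *: δ ^+ l.
have hC : forall j, (j < N)%N -> C`_j = (j == 1%N)%:R.
  move=> j hj; have := congr1 (fun f => f j) hc; rewrite /fps_comp /fps_X /= => <-.
  rewrite /C coef_sum.
  have H := @sum_widen _ j.+1 N (fun l => q l * (δ ^+ l)`_j) hj.
  have -> : \sum_(l < N) (q l *: δ ^+ l)`_j = \sum_(l < N) q l * (δ ^+ l)`_j.
    by apply: eq_bigr => l _; rewrite coefZ.
  rewrite -H; last by move=> l hl _; rewrite pN_pow_small // mulr0.
  by apply: eq_bigr => l _; rewrite (fps_pow_pN _ _ hj).
have -> : \sum_(l < N) q l * (δ ^+ (l + i))`_k = (δ ^+ i * C)`_k.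
  rewrite /C mulr_sumr coef_sum; apply: eq_bigr => l _.
  by rewrite -scalerAr coefZ -exprD addnC.
have -> : (δ ^+ i * C)`_k = (δ ^+ i * 'X)`_k.
  rewrite !coefM; apply: eq_bigr => j _; rewrite coefX hC //.
  by apply: leq_ltn_trans kN; apply: leq_subr.
by rewrite coefMX; case: k k0 {kN}.
Qed.

Definition Pk (K : fieldType) (N : nat) (d : fps K) (k : nat) : {poly K} :=
  \poly_(j < N) (((j`!)%:R^-1 : K) * (pN N d ^+ j)`_k).

Lemma step (K : fieldType) (charK : [pchar K] =i pred0)
  (dd : {linear {poly K} -> {poly K}}) (q d : fps K) (N k : nat) :
  D_indicator dd q -> d 0%N = 0 -> fps_comp q d = fps_X K ->
  (0 < k)%N -> (k < N)%N -> dd (Pk N d k) = Pk N d k.-1.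
Proof.
move=> hq d0 hc k0 kN.
have fnz : forall n, ((n`!)%:R : K) != 0.
  by move=> n; rewrite (proj1 (pcharf0P K) charK) -lt0n fact_gt0.
have ffnz : forall n m, (m <= n)%N -> ((n ^_ m)%:R : K) != 0.
  move=> n m hmn; rewrite (proj1 (pcharf0P K) charK) -lt0n.
  by rewrite ffact_gt0.
rewrite hq.
have H := @sum_widen _ (size (Pk N d k)) N (fun l => q l *: (Pk N d k)^`(l)) (size_poly _ _).
rewrite H; last by move=> j hj _; rewrite derivn_poly0 // scaler0.
apply/polyP => i; rewrite coef_sum /Pk coef_poly.
case: ifP => hi; last first.
  rewrite big1 // => l _; rewrite coefZ coef_derivn coef_poly.
  by rewrite ifF ?mul0rn ?mulr0 //; apply/negbTE; move/negbT: hi; lia.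
rewrite -(core i d0 hc k0 kN) mulr_sumr; apply: eq_bigr => l _.
rewrite coefZ coef_derivn coef_poly.
case: ifP => hli; last first.
  by rewrite pN_pow_small ?mul0rn ?mulr0 //; move/negbT: hli; lia.
rewrite -mulr_natr.
have : ((l + i)`! = (l + i) ^_ l * i`!)%N by rewrite -{1}(ffact_fact (leq_addr i l)) addKn.
move=> ->; rewrite natrM.
have h1 := fnz i; have h2 := ffnz (l + i)%N l (leq_addr _ _).
field; by rewrite h1 h2.
Qed.

Lemma iter_step (K : fieldType) (charK : [pchar K] =i pred0)
  (dd : {linear {poly K} -> {poly K}}) (q d : fps K) (N k : nat) :
  D_indicator dd q -> d 0%N = 0 -> fps_comp q d = fps_X K ->
  (k < N)%N -> forall n, (n <= k)%N -> iter n dd (Pk N d k) = Pk N d (k - n).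
Proof.
move=> hq d0 hc kN; elim=> [|n IH] hn; first by rewrite subn0.
rewrite iterS IH ?(ltnW hn) // (step charK hq d0 hc) ?subnS //; lia.
Qed.

Lemma span (K : fieldType) (t : nat -> {poly K}) :
  (forall n, size (t n) = n.+1) ->
  forall N (p : {poly K}), (size p <= N)%N -> exists c : nat -> K, p = \sum_(n < N) c n *: t n.
Proof.
move=> ht; elim=> [|N IH] p hp.
  by exists (fun _ => 0); rewrite big_ord0; move: hp; rewrite leqn0 size_poly_eq0 => /eqP.
pose a := p`_N / lead_coef (t N).
have hl : lead_coef (t N) = (t N)`_N by rewrite /lead_coef ht.
have hl0 : lead_coef (t N) != 0 by rewrite lead_coef_eq0; apply/eqP => h; move: (ht N); rewrite h size_poly0.
have : (size (p - a *: t N)%R <= N)%N.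
  apply/leq_sizeP => j hj; rewrite coefB coefZ.
  move: hj; rewrite leq_eqVlt => /orP[/eqP<-|hj].
    by rewrite -hl /a divfK // subrr.
  have ht' : (size (t N) <= N.+1)%N by rewrite ht.
  move/leq_sizeP: hp => hp; move/leq_sizeP: ht' => ht'.
  by rewrite hp // ht' // mulr0 subr0.
case/IH => c hc; exists (fun n => if n == N then a else c n).
rewrite big_ord_recr /= eqxx -(subrK (a *: t N) p) hc; congr (_ + _).
by apply: eq_bigr => i _; rewrite /= ltn_eqF.
Qed.

Lemma iter_lin (K : fieldType) (dd : {linear {poly K} -> {poly K}})
  (f : nat -> {poly K}) (c : nat -> K) N i :
  iter i dd (\sum_(n < N) c n *: f n) = \sum_(n < N) c n *: iter i dd (f n).
Proof.
elim: i => [|i IH] //=; rewrite IH linear_sum; apply: eq_bigr => n _.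
by rewrite linearZ.
Qed.

Lemma expand (K : fieldType) (charK : [pchar K] =i pred0)
  (dd : {linear {poly K} -> {poly K}}) (z : nat -> K) (t : nat -> {poly K}) N
  (p : {poly K}) :
  goncarov_basis dd z t -> (size p <= N)%N ->
  p = \sum_(n < N) (((n`!)%:R^-1 : K) * (iter n dd p).[z n]) *: t n.
Proof.
move=> [ht1 ht2] hp.
have fnz : forall n, ((n`!)%:R : K) != 0.
  by move=> n; rewrite (proj1 (pcharf0P K) charK) -lt0n fact_gt0.
have [c hc] := span ht1 hp.
rewrite {1}hc; apply: eq_bigr => i _; rewrite hc.
rewrite iter_lin horner_sum (bigD1 i) //= big1 ?addr0.
  by rewrite hornerZ ht2 eqxx muln1 mulrCA mulVf ?mulr1.
move=> j /negbTE hji; rewrite hornerZ ht2.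
suff -> : (nat_of_ord i == j) = false by rewrite muln0 mulr0.
by apply: contraFF hji => /eqP h; apply/eqP/val_inj.
Qed.

Theorem mainTheorem13 (K : fieldType) (charK : [pchar K] =i pred0)
  (dd : {linear {poly K} -> {poly K}}) (hdd : delta_operator dd)
  (q : fps K) (hq : D_indicator dd q)
  (d : fps K) (hd : comp_inverse q d)
  (z : nat -> K) (t : nat -> {poly K}) (ht : goncarov_basis dd z t) :
  forall m : nat,
    fps_exp (fun j => 'X * (d j)%:P) m =
    \sum_(n < m.+1)
       ((n`!)%:R^-1 : K) *: (t n * fps_exp (fun j => (z n * d j)%:P) (m - n)%N).
Proof.
move=> m; case: hd => q0 d0 hc _.
have hPk : forall k a, (k < m.+1)%N -> fps_exp (fun j => a * (d j)%:P) k =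
    \sum_(j < m.+1) (((j`!)%:R^-1 : K) * (pN m.+1 d ^+ j)`_k) *: a ^+ j.
  by move=> k a hk; apply: fps_exp_expand.
rewrite hPk //.
have -> : \sum_(j < m.+1) (((j`!)%:R^-1 : K) * (pN m.+1 d ^+ j)`_m) *: 'X ^+ j
   = Pk m.+1 d m by rewrite /Pk poly_def.
rewrite {1}(@expand _ charK dd z t m.+1 (Pk m.+1 d m) ht (size_poly _ _)).
apply: eq_bigr => n _.
have hn : (n <= m)%N by rewrite -ltnS.
rewrite (iter_step charK hq d0 hc (ltnSn m) hn).
have -> : (fun j => (z n * d j)%:P) = (fun j => (z n)%:P * (d j)%:P).
  by apply: functional_extensionality => j; rewrite polyCM.
rewrite hPk; last by rewrite ltnS leq_subr.
have -> : \sum_(j < m.+1) (((j`!)%:R^-1 : K) * (pN m.+1 d ^+ j)`_(m - n)) *: (z n)%:P ^+ j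
   = ((Pk m.+1 d (m - n)).[z n])%:P.
  rewrite /Pk horner_poly rmorph_sum; apply: eq_bigr => j _.
  by rewrite /= -polyC_exp polyCM -mul_polyC.
by rewrite [t n * _]mulrC mul_polyC scalerA mulrC.
Qed.
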